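(* Let $q$ be a prime power, $F=\mathbb{F}_{q^2}$, $m\ge1$ with $\gcd(q,m)=1$, and $R=F[x]/\langle x^m-1\rangle$. Let $C\subseteq R^2$ be the quasi-cyclic code generated by one element $(g_{11}(x),g_{12}(x))$, where $g_{11}(x)\mid x^m-1$ and $\deg g_{12}<m$. Let $g(x)=\gcd(g_{11}(x),g_{12}(x))$. Then $C$ is Hermitian LCD if and only if $$\gcd\left(\frac{x^m-1}{g(x)},\ g_{11}(x)\hat g_{11}(x)+g_{12}(x)\hat g_{12}(x)\right)=1.$$
   Context: Elements of $R$ are represented by polynomials of degree $<m$ and identified with their coefficient vectors in $F^m$; a quasi-cyclic code of length $2m$ and index 2 is an $R$-submodule of $R^2$. The Hermitian inner product of $(a_1,a_2),(b_1,b_2)\in R^2$ is $\sum_k a_{1,k}b_{1,k}^q+\sum_k a_{2,k}b_{2,k}^q$, where $a_{i,k},b_{i,k}$ are the coefficients of $x^k$; $C$ is Hermitian LCD if $C\cap C^{\perp_h}=\{0\}$. For $f=\sum f_kx^k\in F[x]$ of degree at most $m$, $\hat f(x)=x^m f^{[q]}(x^{-1})$, where $f^{[q]}=\sum f_k^q x^k$. *)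

(* Defs.v *)
From HB Require Import structures.
From mathcomp Require Import all_boot all_order all_algebra all_field.
Set Implicit Arguments. Unset Strict Implicit. Unset Printing Implicit Defensive.
Import GRing.Theory.
Local Open Scope ring_scope.

(* R = F[x]/<x^m - 1>: elements represented by polynomials of degree < m,
   i.e. by their remainder modulo x^m - 1. *)
Definition xm1 (F : fieldType) (m : nat) : {poly F} := 'X^m - 1.

Definition qc_code1 (F : fieldType) (m : nat) (g1 g2 : {poly F})
    (c : {poly F} * {poly F}) : Prop :=
  exists a : {poly F}, c = ((a * g1) %% xm1 F m, (a * g2) %% xm1 F m).

Definition herm_ip (F : fieldType) (q m : nat) (c d : {poly F} * {poly F}) : F :=
  \sum_(k < m) c.1`_k * (d.1`_k) ^+ q + \sum_(k < m) c.2`_k * (d.2`_k) ^+ q.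

Definition inR2 (F : fieldType) (m : nat) (c : {poly F} * {poly F}) : Prop :=
  (size c.1 <= m)%N /\ (size c.2 <= m)%N.

Definition herm_dual (F : fieldType) (q m : nat)
    (C : {poly F} * {poly F} -> Prop) (c : {poly F} * {poly F}) : Prop :=
  inR2 m c /\ forall d, C d -> herm_ip q m c d = 0.

Definition herm_LCD (F : fieldType) (q m : nat)
    (C : {poly F} * {poly F} -> Prop) : Prop :=
  forall c, C c -> herm_dual q m C c -> c = (0, 0).

(* \hat f (x) = x^m f^{[q]}(x^{-1}) for deg f <= m:
   coefficient of x^i is (f_{m-i})^q, for 0 <= i <= m. *)
Definition hatp (F : fieldType) (q m : nat) (f : {poly F}) : {poly F} :=
  \poly_(i < m.+1) (f`_(m - i) ^+ q).

(* Main.v *)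
Require Import Defs.
From HB Require Import structures.
From mathcomp Require Import all_boot all_order all_algebra all_field.
From mathcomp Require Import ring zify.
Set Implicit Arguments. Unset Strict Implicit. Unset Printing Implicit Defensive.
Import GRing.Theory.
Local Open Scope ring_scope.

Section Alg.
Variables (F : fieldType) (f : {rmorphism F -> F}) (m : nat).
Hypothesis m_gt0 : (0 < m)%N.

Local Notation n := (xm1 F m).
Definition tau (p : {poly F}) : {poly F} := (map_poly f p) \Po 'X^(m.-1).
Definition Lam (p : {poly F}) : F := (p %% n)`_0.

Lemma size_n : size n = m.+1.
Proof. by rewrite /xm1 size_XnsubC. Qed.

Lemma n_neq0 : n != 0.
Proof. by rewrite -size_poly_eq0 size_n. Qed.

Lemma cong_sym p p' : n %| p - p' -> n %| p' - p.
Proof. by move=> h; rewrite -opprB dvdpNr. Qed.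

Lemma cong_trans p p' p'' : n %| p - p' -> n %| p' - p'' -> n %| p - p''.
Proof. by move=> h1 h2; rewrite -(subrK p' p) -addrA dvdp_add. Qed.

Lemma congD p p' r r' : n %| p - p' -> n %| r - r' -> n %| (p + r) - (p' + r').
Proof. by move=> h1 h2; rewrite opprD addrACA dvdp_add. Qed.

Lemma congM p p' r r' : n %| p - p' -> n %| r - r' -> n %| (p * r) - (p' * r').
Proof.
move=> h1 h2.
have -> : p * r - p' * r' = (p - p') * r + p' * (r - r').
  by rewrite mulrBl mulrBr addrA subrK.
by apply: dvdp_add; [exact: dvdp_mulr | exact: dvdp_mull].
Qed.

Lemma cong_refl p : n %| p - p.
Proof. by rewrite subrr dvdp0. Qed.

Lemma cong_mod p : n %| (p %% n) - p.
Proof.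
rewrite {2}(divp_eq p n) opprD addrCA subrr addr0 dvdpNr.
by rewrite dvdp_mull.
Qed.

Lemma xpow_cong a : n %| 'X^a - 'X^(a %% m).
Proof.
rewrite {1}(divn_eq a m) exprD (mulnC (a %/ m)%N) exprM.
have -> : ('X^m) ^+ (a %/ m) * 'X^(a %% m) - 'X^(a %% m) =
          (('X^m) ^+ (a %/ m) - 1 ^+ (a %/ m)) * 'X^(a %% m) :> {poly F}.
  by rewrite expr1n mulrBl mul1r.
by rewrite dvdp_mulr // subrXX dvdp_mulr.
Qed.

Lemma xpow_cong2 a b : (a %% m = b %% m)%N -> n %| 'X^a - 'X^b.
Proof.
move=> h; apply: (cong_trans (xpow_cong a)); rewrite h.
exact: cong_sym (xpow_cong b).
Qed.

Lemma Lam_cong p p' : n %| p - p' -> Lam p = Lam p'.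
Proof.
move=> h; rewrite /Lam; congr (_`_0).
by rewrite -(subrK p' p) modpD (modp_eq0 h) add0r.
Qed.

Lemma LamD p r : Lam (p + r) = Lam p + Lam r.
Proof. by rewrite /Lam modpD coefD. Qed.

Lemma Lam0 : Lam 0 = 0.
Proof. by rewrite /Lam mod0p coef0. Qed.

Lemma LamZ c p : Lam (c *: p) = c * Lam p.
Proof. by rewrite /Lam modpZl coefZ. Qed.

Lemma Lam_sum I (r : seq I) (P : pred I) (G : I -> {poly F}) :
  Lam (\sum_(i <- r | P i) G i) = \sum_(i <- r | P i) Lam (G i).
Proof. exact: (big_morph Lam LamD Lam0). Qed.

Lemma LamX a : Lam 'X^a = ((a %% m)%N == 0%N)%:R.
Proof.
rewrite (Lam_cong (xpow_cong a)) /Lam modp_small; last first.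
  by rewrite size_polyXn size_n ltnS ltn_pmod.
by rewrite coefXn eq_sym.
Qed.

Lemma compXn a (r : {poly F}) : 'X^a \Po r = r ^+ a.
Proof.
elim: a => [|a IH]; first by rewrite !expr0 comp_polyC.
by rewrite !exprS comp_polyM comp_polyX IH.
Qed.

Lemma tauD p r : tau (p + r) = tau p + tau r.
Proof. by rewrite /tau rmorphD comp_polyD. Qed.
Lemma tauB p r : tau (p - r) = tau p - tau r.
Proof. by rewrite /tau rmorphB comp_polyB. Qed.
Lemma tauM p r : tau (p * r) = tau p * tau r.
Proof. by rewrite /tau rmorphM comp_polyM. Qed.
Lemma tauXn a : tau 'X^a = 'X^(a * m.-1).
Proof. by rewrite /tau map_polyXn compXn -exprM mulnC. Qed.

Lemma tau_n : tau n = 'X^(m * m.-1) - 1.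
Proof.
rewrite /xm1 tauB tauXn /tau rmorph1 comp_polyC; congr (_ - _).
Qed.

Lemma tau_dvd p : n %| p -> n %| tau p.
Proof.
case/dvdpP=> r ->; rewrite tauM dvdp_mull // tau_n.
rewrite -[1 in X in _ %| X](expr0 'X); apply: xpow_cong2.
by rewrite modnMr mod0n.
Qed.

Lemma tau_cong p p' : n %| p - p' -> n %| tau p - tau p'.
Proof. by rewrite -tauB; apply: tau_dvd. Qed.


Lemma arith1 k i : (k < m)%N -> (i < m)%N ->
  (((k + i * m.-1) %% m)%N == 0%N) = (k == i).
Proof.
move=> hk hi.
have e : (k + i * m.-1 + i = k + i * m)%N.
  by rewrite -addnA -{2}(muln1 i) -mulnDr addn1 prednK.
apply/idP/eqP => [/eqP h|->].
  have : ((k + i * m.-1 + i) %% m = i)%N by rewrite -modnDml h add0n modn_small.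
  by rewrite e addnC modnMDl modn_small.
have e2 : (i + i * m.-1 = i * m)%N by rewrite -{1}(muln1 i) -mulnDr add1n prednK.
by rewrite e2 modnMl.
Qed.

Lemma poly_expand (c : {poly F}) N : (size c <= N)%N ->
  c = \sum_(k < N) c`_k *: 'X^k.
Proof.
move=> hc; rewrite -poly_def; apply/polyP=> j; rewrite coef_poly.
by case: ltnP => // hj; rewrite nth_default // (leq_trans hc hj).
Qed.

Lemma tau_expand (d : {poly F}) N : (size d <= N)%N ->
  tau d = \sum_(i < N) f d`_i *: 'X^(i * m.-1).
Proof.
move=> hN; rewrite /tau comp_polyE size_map_poly.
rewrite (big_ord_widen N (fun i => (map_poly f d)`_i *: ('X^(m.-1))^+i) hN).
rewrite big_mkcond; apply: eq_bigr => i _ /=; case: ifP => hi.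
  by rewrite coef_map -exprM mulnC.
by rewrite nth_default ?rmorph0 ?scale0r // leqNgt hi.
Qed.

Lemma ip_lemma (c d : {poly F}) : (size c <= m)%N -> (size d <= m)%N ->
  \sum_(k < m) c`_k * f d`_k = Lam (c * tau d).
Proof.
move=> hc hd.
rewrite (tau_expand hd) {2}(poly_expand hc) mulr_suml Lam_sum.
apply: eq_bigr => k _; rewrite mulr_sumr Lam_sum.
rewrite (bigD1 k) //= big1 ?addr0.
  by rewrite -scalerAl -scalerAr scalerA -exprD LamZ LamX arith1 // eqxx mulr1.
move=> i hik; rewrite -scalerAl -scalerAr scalerA -exprD LamZ LamX arith1 //.
by rewrite (_ : (k == i :> nat) = false) ?mulr0 // eq_sym; exact: negbTE hik.
Qed.

Lemma U_lemma U : (forall b, Lam (tau b * U) = 0) -> n %| U.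
Proof.
move=> H; set V := U %% n.
have hV : (size V <= m)%N by rewrite -ltnS -size_n ltn_modp n_neq0.
suff V0 : V = 0 by apply/modp_eq0P.
apply/polyP => j; rewrite coef0.
case: (ltnP j m) => hj; last by rewrite nth_default // (leq_trans hV hj).
have : \sum_(k < m) V`_k * f ('X^j)`_k = V`_j.
  rewrite (bigD1 (Ordinal hj)) //= coefXn eqxx rmorph1 mulr1 big1 ?addr0 //.
  move=> i hi; rewrite coefXn.
  by rewrite (_ : (i == j :> nat) = false) ?rmorph0 ?mulr0 //; exact: negbTE hi.
rewrite ip_lemma ?size_polyXn // => <-.
rewrite mulrC -(H 'X^j); apply: Lam_cong.
by apply: congM; [exact: cong_refl | exact: cong_mod].
Qed.

Lemma hat_cong q (fE : forall x, f x = x ^+ q) (g : {poly F}) :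
  (size g <= m.+1)%N -> n %| hatp q m g - tau g.
Proof.
move=> hg; rewrite /hatp poly_def (tau_expand hg) (reindex_inj rev_ord_inj) /=.
rewrite -sumrB.
apply: (big_ind (fun p => n %| p)) => [|x y|i _]; [exact: dvdp0 | exact: dvdp_add | ].
have hi : (i <= m)%N := ltn_ord i.
rewrite subSS subKn // -fE -scalerBr -mul_polyC dvdp_mull //.
apply: xpow_cong2; apply/eqP; rewrite -(eqn_modDr i) subnK //.
have e2 : (i * m.-1 + i = i * m)%N by rewrite -{2}(muln1 i) -mulnDr addn1 prednK.
by rewrite e2 modnn modnMl.
Qed.

Lemma size_mod (p : {poly F}) : leq (size (p %% n)) m.
Proof. by rewrite -ltnS -size_n ltn_modp n_neq0. Qed.

Lemma cop_cong (h x y : {poly F}) : h %| x - y -> coprimep h x = coprimep h y.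
Proof.
move=> hd; rewrite -coprimep_modr -[in RHS]coprimep_modr.
by rewrite -(subrK y x) modpD (modp_eq0 hd) add0r.
Qed.

Lemma sep_n : (m%:R != 0 :> F) -> separable_poly n.
Proof.
move=> m0; rewrite unlock; apply/Bezout_coprimepP.
exists (-1, (m%:R)^-1 *: 'X) => /=.
rewrite /xm1 derivB derivXn derivC subr0 -scaler_nat -scalerAl -scalerAr scalerA.
rewrite mulVf // scale1r -exprS prednK // mulN1r opprB subrK.
exact: eqpxx.
Qed.

Lemma main_alg q (fE : forall x, f x = x ^+ q) (g1 g2 : {poly F}) :
  (m%:R != 0 :> F) -> g1 %| n -> (size g2 <= m)%N ->
  herm_LCD q m (qc_code1 m g1 g2) <->
  coprimep (n %/ gcdp g1 g2) (g1 * hatp q m g1 + g2 * hatp q m g2).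
Proof.
move=> m0 g1n g2m.
set T := g1 * tau g1 + g2 * tau g2.
have ipE a b : herm_ip q m ((a*g1) %% n, (a*g2) %% n) ((b*g1) %% n, (b*g2) %% n)
    = Lam (tau b * (a * T)).
  rewrite /herm_ip /=.
  under eq_bigr do rewrite -fE.
  under [X in _ + X]eq_bigr do rewrite -fE.
  rewrite !ip_lemma ?size_mod // -LamD; apply: Lam_cong.
  have -> : tau b * (a * T) = (a*g1) * tau (b*g1) + (a*g2) * tau (b*g2).
    by rewrite !tauM /T; ring.
  apply: congD; apply: congM; (try exact: cong_mod); apply: tau_cong; exact: cong_mod.
have g10 : g1 != 0.
  by apply: contraNneq n_neq0 => e; move: g1n; rewrite e dvd0p.
set g := gcdp g1 g2; set h := n %/ g.
have gn : g %| n by apply: dvdp_trans g1n; exact: dvdp_gcdl.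
have hn : h * g = n by rewrite /h divpK.
have g0 : g != 0 by rewrite gcdp_eq0 negb_and g10.
have h0 : h != 0 by apply: contraNneq n_neq0 => e; rewrite -hn e mul0r.
have hdiv a : (n %| a * g1) && (n %| a * g2) = (h %| a).
  by rewrite -dvdp_gcd (eqp_dvdr _ (gcdp_mul2l _ _ _)) -hn dvdp_mul2r.
have hndvd : h %| n by rewrite -hn dvdp_mulr.
have cop_hg : coprimep h g.
  have := sep_n m0; case/separable_polyP => H _.
  by apply: H; rewrite hn dvdpp.
have -> : coprimep h (g1 * hatp q m g1 + g2 * hatp q m g2) = coprimep h T.
  apply: cop_cong; apply: dvdp_trans hndvd _.
  apply: congD; apply: congM; try exact: cong_refl; apply: (hat_cong fE).
    by rewrite -size_n dvdp_leq // n_neq0.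
  exact: leqW.
split.
- move=> LCD.
  have P a : n %| a * T -> h %| a.
    move=> haT; rewrite -hdiv.
    have hc : ((a*g1) %% n, (a*g2) %% n) = (0, 0).
      apply: LCD; first by exists a.
      split; first by split; apply: size_mod.
      move=> d [b ->]; rewrite ipE.
      rewrite (@Lam_cong _ 0) ?Lam0 // subr0; exact: dvdp_mull.
    by case: hc => /modp_eq0P -> /modp_eq0P ->.
  set d := gcdp h T.
  have e1 : h %/ d * d = h by rewrite divpK // dvdp_gcdl.
  have e2 : T %/ d * d = T by rewrite divpK // dvdp_gcdr.
  have : h %| (h %/ d) * g.
    apply: P; apply/dvdpP; exists (T %/ d).
    rewrite -hn -{1}e2 -{2}e1; ring.
  rewrite Gauss_dvdpl // => hd.
  have hd0 : h %/ d != 0 by apply: contraNneq h0 => e; rewrite -e1 e mul0r.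
  have d0 : d != 0 by rewrite /d gcdp_eq0 negb_and h0.
  have hle := dvdp_leq hd0 hd; rewrite (size_divp h d0) in hle.
  have hpos : (0 < size h)%N by rewrite size_poly_gt0.
  rewrite /coprimep -/d.
  move: d0 hle; rewrite -size_poly_eq0; case: (size d) => [|[|k]] //= _ hle.
  by move: hle; rewrite leqNgt ltn_subrL hpos.
- move=> hcop c [a ->] [_ Hd].
  have haT : n %| a * T.
    apply: U_lemma => b; rewrite -ipE; apply: Hd; exists b; reflexivity.
  have : h %| a by rewrite -(Gauss_dvdpl _ hcop); exact: dvdp_trans hndvd haT.
  by rewrite -hdiv => /andP[/modp_eq0P -> /modp_eq0P ->].
Qed.

End Alg.

Section Frob.
Variables (F : fieldType) (q : nat).
Hypothesis qadd : forall x y : F, (x + y) ^+ q = x ^+ q + y ^+ q.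
Definition frobq (x : F) := x ^+ q.
Fact frobq_zmod : zmod_morphism frobq.
Proof.
move=> x y; rewrite /frobq.
have := qadd (x - y) y; rewrite subrK => ->; by rewrite addrK.
Qed.
Fact frobq_mon : monoid_morphism frobq.
Proof. by split; rewrite /frobq ?expr1n // => x y; rewrite exprMn. Qed.
HB.instance Definition _ := GRing.isZmodMorphism.Build F F frobq frobq_zmod.
HB.instance Definition _ := GRing.isMonoidMorphism.Build F F frobq frobq_mon.
Definition frobRM : {rmorphism F -> F} := frobq.
End Frob.

Theorem theorem6p4 (q : nat) (F : finFieldType) (m : nat)
    (g11 g12 : {poly F}) :
  (exists p k : nat, prime p /\ (0 < k)%N /\ q = (p ^ k)%N) ->
  #|F| = (q ^ 2)%N ->
  (1 <= m)%N ->
  coprime q m ->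
  g11 %| xm1 F m ->
  (size g12 <= m)%N ->
  herm_LCD q m (qc_code1 m g11 g12) <->
  coprimep (xm1 F m %/ gcdp g11 g12)
           (g11 * hatp q m g11 + g12 * hatp q m g12).
Proof.
move=> [p [k [pp [k0 ->]]]] card m1 cop g1n g2m.
have pF : p \in [pchar F].
  by apply: (@card_finPcharP _ p (k * 2)); rewrite // card expnM.
have qadd (x y : F) : (x + y) ^+ (p ^ k) = x ^+ (p ^ k) + y ^+ (p ^ k).
  apply: exprDn_pchar.
  by rewrite (eq_pnat _ (pcharf_eq pF)) pnatX pnat_id.
have m0 : m%:R != 0 :> F.
  by rewrite -(dvdn_pcharf pF) -prime_coprime // -(@coprime_pexpl k p m k0).
exact: (@main_alg F (frobRM qadd) m m1 (p ^ k) (fun x => erefl) g11 g12 m0 g1n g2m).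
Qed.
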